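(* Let $E/\mathbb{Q}$ be given by the model $y^2=x^3+Ax+B$ ($A,B\in\mathbb{Z}$) described in the context and $X=\max\{|A|^3,|B|^2\}$. Let $P,Q\in E(\mathbb{Q})$ satisfy $X^{1/6}\le x(P)<x(Q)$ and $x(P)=x_1/s$, $x(Q)=x_2/s$ with $x_1,x_2\in\mathbb{Z}$ and $s$ a positive integer. Then $h(P+Q)\le h(P)+2h(Q)+3h(s)+2.9$.
   Context: The model is obtained from a global minimal Weierstrass equation of $E$ by the substitution $x\mapsto \frac{1}{36}(x-3b_2)$, $y\mapsto \frac12(\frac{y}{108}-\frac{a_1}{36}(x-3b_2)-a_3)$. $h$ is the absolute logarithmic Weil height (so $h(s)=\log s$) and $h(P)=h(x(P))$. *)

(* Defs.v *)
From Stdlib Require Import ZArith QArith Qreduction Reals.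
Open Scope Z_scope.

(** Weierstrass invariants of a general (long) Weierstrass equation
    y^2 + a1 xy + a3 y = x^3 + a2 x^2 + a4 x + a6 with integer coefficients. *)
Definition wb2 (a1 a2 a3 a4 a6 : Z) : Z := a1^2 + 4*a2.
Definition wb4 (a1 a2 a3 a4 a6 : Z) : Z := 2*a4 + a1*a3.
Definition wb6 (a1 a2 a3 a4 a6 : Z) : Z := a3^2 + 4*a6.
Definition wb8 (a1 a2 a3 a4 a6 : Z) : Z :=
  a1^2*a6 + 4*a2*a6 - a1*a3*a4 + a2*a3^2 - a4^2.
Definition wc4 (a1 a2 a3 a4 a6 : Z) : Z :=
  let b2 := wb2 a1 a2 a3 a4 a6 in let b4 := wb4 a1 a2 a3 a4 a6 in
  b2^2 - 24*b4.
Definition wc6 (a1 a2 a3 a4 a6 : Z) : Z :=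
  let b2 := wb2 a1 a2 a3 a4 a6 in let b4 := wb4 a1 a2 a3 a4 a6 in
  let b6 := wb6 a1 a2 a3 a4 a6 in
  - b2^3 + 36*b2*b4 - 216*b6.
Definition wdisc (a1 a2 a3 a4 a6 : Z) : Z :=
  let b2 := wb2 a1 a2 a3 a4 a6 in let b4 := wb4 a1 a2 a3 a4 a6 in
  let b6 := wb6 a1 a2 a3 a4 a6 in let b8 := wb8 a1 a2 a3 a4 a6 in
  - b2^2*b8 - 8*b4^3 - 27*b6^2 + 9*b2*b4*b6.

(** The standard change of variables x = u^2 x' + r, y = u^3 y' + s u^2 x' + t
    takes the equation with coefficients a_i to the one with coefficients a_i'. *)
Definition wiso (a1 a2 a3 a4 a6 a1' a2' a3' a4' a6' : Z) (u r s t : Q) : Prop :=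
  ~ (u == 0)%Q /\
  (u * inject_Z a1' == inject_Z a1 + 2*s)%Q /\
  (u^2 * inject_Z a2' == inject_Z a2 - s * inject_Z a1 + 3*r - s^2)%Q /\
  (u^3 * inject_Z a3' == inject_Z a3 + r * inject_Z a1 + 2*t)%Q /\
  (u^4 * inject_Z a4' == inject_Z a4 - s * inject_Z a3 + 2*r*inject_Z a2
                         - (t + r*s) * inject_Z a1 + 3*r^2 - 2*s*t)%Q /\
  (u^6 * inject_Z a6' == inject_Z a6 + r * inject_Z a4 + r^2 * inject_Z a2 + r^3
                         - t * inject_Z a3 - t^2 - r*t*inject_Z a1)%Q.

Definition global_minimal (a1 a2 a3 a4 a6 : Z) : Prop :=
  wdisc a1 a2 a3 a4 a6 <> 0 /\
  forall (a1' a2' a3' a4' a6' : Z) (u r s t : Q),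
    wiso a1 a2 a3 a4 a6 a1' a2' a3' a4' a6' u r s t ->
    Z.abs (wdisc a1 a2 a3 a4 a6) <= Z.abs (wdisc a1' a2' a3' a4' a6').

(** The short model obtained by x |-> (x - 3 b2)/36,
    y |-> (y/108 - a1 (x - 3 b2)/36 - a3)/2 is y^2 = x^3 - 27 c4 x - 54 c6. *)
Definition shortA (a1 a2 a3 a4 a6 : Z) : Z := -27 * wc4 a1 a2 a3 a4 a6.
Definition shortB (a1 a2 a3 a4 a6 : Z) : Z := -54 * wc6 a1 a2 a3 a4 a6.

Inductive pt : Type := Inf | Aff (x y : Q).

Definition on_curve (A B : Z) (P : pt) : Prop :=
  match P with
  | Inf => True
  | Aff x y => (y^2 == x^3 + inject_Z A * x + inject_Z B)%Q
  end.

Definition pt_add (A : Z) (P Q : pt) : pt :=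
  match P, Q with
  | Inf, _ => Q
  | _, Inf => P
  | Aff x1 y1, Aff x2 y2 =>
      if Qeq_bool x1 x2 then
        if Qeq_bool y1 (- y2) then Inf
        else let l := ((3 * x1^2 + inject_Z A) / (2 * y1))%Q in
             let x3 := (l^2 - x1 - x2)%Q in
             Aff x3 (l * (x1 - x3) - y1)%Q
      else let l := ((y2 - y1) / (x2 - x1))%Q in
           let x3 := (l^2 - x1 - x2)%Q in
           Aff x3 (l * (x1 - x3) - y1)%Q
  end.

Definition hQ (q : Q) : R :=
  let q' := Qred q in
  ln (IZR (Z.max (Z.abs (Qnum q')) (Zpos (Qden q')))).

Definition hpt (P : pt) : R :=
  match P with Inf => 0%R | Aff x _ => hQ x end.

Definition xcoord (P : pt) : Q := match P with Inf => 0%Q | Aff x _ => x end.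

(* Main.v *)
Require Import Defs.
From Stdlib Require Import ZArith QArith Reals.
From Stdlib Require Import Qreduction Qreals Znumtheory Lia Lra Psatz.

Lemma Qred_gcd (q : Q) :
  Z.gcd (Qnum (Qred q)) (Zpos (Qden (Qred q))) = 1%Z /\ Qred q == q.
Proof.
  split; [|apply Qred_correct].
  destruct q as [a b]; unfold Qred.
  pose proof (Z.ggcd_gcd a (Zpos b)) as Hg.
  pose proof (Z.ggcd_correct_divisors a (Zpos b)) as Hd.
  destruct (Z.ggcd a (Zpos b)) as [g [aa bb]]; simpl in *.
  destruct Hd as [Ha Hb]. subst g.
  assert (Hgp : (0 < Z.gcd a (Zpos b))%Z).
  { pose proof (Z.gcd_nonneg a (Zpos b)).
    destruct (Z.eq_dec (Z.gcd a (Zpos b)) 0) as [E|E]; [|lia].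
    apply Z.gcd_eq_0 in E; lia. }
  assert (bb > 0)%Z by nia.
  rewrite Z2Pos.id by lia.
  assert (aa = a / Z.gcd a (Zpos b))%Z as ->.
  { rewrite Ha at 1. rewrite Z.mul_comm, Z.div_mul; lia. }
  assert (bb = Zpos b / Z.gcd a (Zpos b))%Z as ->.
  { rewrite Hb at 1. rewrite Z.mul_comm, Z.div_mul; lia. }
  rewrite Z.gcd_div_factor; try lia.
  - apply Z.div_same; lia.
  - apply Z.gcd_divide_l.
  - apply Z.gcd_divide_r.
Qed.

Lemma Qred_eqn (q : Q) (N D : Z) : (0 < D)%Z -> q * inject_Z D == inject_Z N ->
  (Qnum (Qred q) * D = N * Zpos (Qden (Qred q)))%Z.
Proof.
  intros HD H. destruct (Qred_gcd q) as [_ Hc].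
  rewrite <- Hc in H. destruct (Qred q) as [a b]. unfold Qeq, inject_Z in H; simpl in H.
  rewrite Pos.mul_1_r in H. simpl. lia.
Qed.

Lemma hQ_upper (q:Q) (N D:Z) : (0<D)%Z -> q * inject_Z D == inject_Z N ->
  (Z.abs (Qnum (Qred q)) <= Z.abs N /\ Zpos (Qden (Qred q)) <= D)%Z.
Proof.
  intros HD H. pose proof (Qred_eqn q N D HD H) as E.
  destruct (Qred_gcd q) as [G _].
  destruct (Qred q) as [a b]; simpl in *.
  assert (Hdiv : (Zpos b | D)%Z).
  { apply Z.gauss with a. exists N. lia. rewrite Z.gcd_comm; exact G. }
  destruct Hdiv as [k Hk]. subst D.
  assert (0 < k)%Z by nia.
  split; [|nia].
  assert (a * k = N)%Z by nia. subst N. rewrite Z.abs_mul. nia.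
Qed.

Lemma hQ_lower (q:Q) (x S:Z) : (0<S)%Z -> q * inject_Z S == inject_Z x ->
  (Z.abs x <= S * Z.max (Z.abs (Qnum (Qred q))) (Zpos (Qden (Qred q))) /\
   S <= S * Z.max (Z.abs (Qnum (Qred q))) (Zpos (Qden (Qred q))))%Z.
Proof.
  intros HS H. pose proof (Qred_eqn q x S HS H) as E.
  destruct (Qred q) as [a b]; simpl in *.
  assert (E2 : Z.abs (a * S) = Z.abs (x * Zpos b)) by now rewrite E.
  rewrite !Z.abs_mul in E2. rewrite (Z.abs_eq S) in E2 by lia. simpl in E2.
  split; nia.
Qed.

Lemma Qint_sq (q:Q) (n:Z) : q*q == inject_Z n -> exists m, q == inject_Z m.
Proof.
  intros H. destruct (Qred_gcd q) as [G Hc].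
  rewrite <- Hc in H.
  enough (exists m, Qred q == inject_Z m) as [m Hm].
  { exists m. rewrite <- Hc. exact Hm. }
  destruct (Qred q) as [a b]; simpl in *.
  unfold Qeq, inject_Z in H; simpl in H.
  assert (Hd : (Zpos b | a * a)%Z).
  { exists (n * Zpos b)%Z. lia. }
  apply Z.gauss in Hd; [|rewrite Z.gcd_comm; exact G].
  assert (Hb : (Zpos b | 1)%Z).
  { rewrite <- G. apply Z.gcd_greatest; [exact Hd| apply Z.divide_refl]. }
  apply Z.divide_1_r_nonneg in Hb; [|lia].
  exists a. unfold Qeq; simpl. rewrite Hb. lia.
Qed.
Open Scope R_scope.

Lemma core (a b x1 x2 m : R) : 0 < x1 -> x1 < x2 ->
  Rabs a <= x1^2 -> Rabs b <= x1^3 ->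
  0 <= x1^3 + a*x1 + b -> 0 <= x2^3 + a*x2 + b ->
  m^2 = (x1^3 + a*x1 + b) * (x2^3 + a*x2 + b) ->
  Rabs ((x1*x2 + a)*(x1+x2) + 2*b - 2*m) <= 12*x1*x2^2.
Proof.
  intros h1 h2 ha hb f1 f2 hm.
  assert (ha' : - x1^2 <= a <= x1^2) by (split_Rabs; lra).
  assert (hb' : - x1^3 <= b <= x1^3) by (split_Rabs; lra).
  assert (x1^2 <= x1*x2) by nra.
  assert (x1*x2 <= x2^2) by nra.
  assert (x1^3 <= x1^2*x2) by nra.
  assert (x1^2*x2 <= x2^3) by nra.
  assert (g1 : x1^3 + a*x1 + b <= 3*x1^3) by nra.
  assert (g2 : x2^3 + a*x2 + b <= 3*x2^3) by nra.
  assert (m^2 <= 9*x1^3*x2^3).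
  { rewrite hm. replace (9*x1^3*x2^3) with ((3*x1^3)*(3*x2^3)) by ring.
    apply Rmult_le_compat; lra. }
  assert (x1^3*x2^3 <= x1^2*x2^4).
  { replace (x1^3*x2^3) with ((x1^2*x2^3)*x1) by ring.
    replace (x1^2*x2^4) with ((x1^2*x2^3)*x2) by ring.
    apply Rmult_le_compat_l; [|lra]. apply Rmult_le_pos; apply pow_le; lra. }
  assert (hm3 : Rabs m <= 3*x1*x2^2).
  { destruct (Rle_lt_dec (Rabs m) (3*x1*x2^2)) as [r|r]; auto. exfalso.
    assert (Rabs m ^ 2 = m ^ 2) by apply pow2_abs.
    assert (0 <= 3*x1*x2^2) by (apply Rmult_le_pos; [lra| apply pow_le; lra]).
    nra. }
  assert (hm3' : - (3*x1*x2^2) <= m <= 3*x1*x2^2) by (split_Rabs; lra).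
  assert (0 <= x1*x2 + a <= 2*x1*x2) by nra.
  assert (0 <= (x1*x2 + a)*(x1+x2) <= 2*x1*x2*(2*x2)) by nra.
  assert (x1^3 <= x1*x2^2) by nra.
  apply Rabs_le. nra.
Qed.

Lemma ln12 : ln 12 < 29/10.
Proof.
  assert (E : exp (29/10) = exp (29/100) ^ 10).
  { replace (29/10) with (29/100+29/100+29/100+29/100+29/100+29/100+29/100+29/100+29/100+29/100) by field.
    rewrite !exp_plus. simpl. ring. }
  assert (H : 1 + 29/100 < exp (29/100)) by (apply exp_ineq1; lra).
  assert (H2 : (1+29/100)^10 <= exp (29/100) ^ 10) by (apply pow_incr; lra).
  rewrite <- (ln_exp (29/10)). apply ln_increasing; [lra|]. rewrite E. 
  eapply Rlt_le_trans; [|exact H2]. lra.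
Qed.

Lemma Q2R_inj (z : Z) : Q2R (inject_Z z) = IZR z.
Proof. unfold Q2R, inject_Z; simpl. field. Qed.

Lemma ln_le' (x y : R) : (0 < x) -> (x <= y) -> (ln x <= ln y).
Proof. intros h1 h2. destruct (Rle_lt_or_eq_dec _ _ h2) as [h|h].
  - left; apply ln_increasing; auto. - subst; lra. Qed.

Lemma Zmax_IZR_le (u v : Z) (c : R) : (IZR u <= c) -> (IZR v <= c) -> (IZR (Z.max u v) <= c).
Proof. intros; apply Z.max_case; auto. Qed.

Lemma pow_lt_S (a b : R) (n : nat) : 0 <= b -> b < a -> b ^ S n < a ^ S n.
Proof. intros hb hab. induction n.
  - simpl. lra.
  - change (b * b ^ S n < a * a ^ S n). apply Rmult_le_0_lt_compat; auto. apply pow_le; auto. Qed.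

Lemma ln0' : ln 0 = 0.
Proof. unfold ln. destruct (Rlt_dec 0 0) as [r|r]; [exfalso; exact (Rlt_irrefl _ r)|reflexivity]. Qed.

Lemma low_bounds (A B : Z) (p : R) :
  (Rpower (IZR (Z.max (Z.abs A ^ 3) (Z.abs B ^ 2))) (1/6) <= p) ->
  (0 < p /\ Rabs (IZR A) <= p^2 /\ Rabs (IZR B) <= p^3).
Proof.
  intros H.
  set (X := Z.max (Z.abs A ^ 3) (Z.abs B ^ 2)) in H.
  assert (HA : (Rabs (IZR A))^3 <= IZR X).
  { rewrite <- abs_IZR. replace (IZR (Z.abs A) ^ 3) with (IZR (Z.abs A ^ 3)).
    - apply IZR_le. apply Z.le_max_l.
    - replace (Z.abs A ^ 3)%Z with (Z.abs A * Z.abs A * Z.abs A)%Z by ring.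
      rewrite !mult_IZR. ring. }
  assert (HB : (Rabs (IZR B))^2 <= IZR X).
  { rewrite <- abs_IZR. replace (IZR (Z.abs B) ^ 2) with (IZR (Z.abs B ^ 2)).
    - apply IZR_le. apply Z.le_max_r.
    - replace (Z.abs B ^ 2)%Z with (Z.abs B * Z.abs B)%Z by ring.
      rewrite !mult_IZR. ring. }
  assert (hX : (0 <= X)%Z) by (unfold X; pose proof (Z.abs_nonneg B); lia).
  pose proof (Rabs_pos (IZR A)). pose proof (Rabs_pos (IZR B)).
  destruct (Z.eq_dec X 0) as [E|E].
  - rewrite E in H, HA, HB. unfold Rpower in H. rewrite ln0' in H.
    rewrite Rmult_0_r, exp_0 in H.
    assert (Rabs (IZR A) <= 0).
    { destruct (Rle_lt_dec (Rabs (IZR A)) 0) as [r|r]; auto. pose proof (pow_lt _ 3 r). lra. }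
    assert (Rabs (IZR B) <= 0).
    { destruct (Rle_lt_dec (Rabs (IZR B)) 0) as [r|r]; auto. pose proof (pow_lt _ 2 r). lra. }
    assert (0 <= p^2) by (apply pow_le; lra). assert (0 <= p^3) by (apply pow_le; lra).
    repeat split; lra.
  - assert (hX' : (0 < IZR X)%R) by (apply IZR_lt; lia).
    set (t := Rpower (IZR X) (1/6)) in H.
    assert (ht : (0 < t)%R) by (unfold t, Rpower; apply exp_pos).
    assert (ht6 : (t ^ 6 = IZR X)%R).
    { unfold t. rewrite <- Rpower_pow by (unfold Rpower; apply exp_pos).
      rewrite Rpower_mult. replace (1/6 * INR 6) with 1%R by (simpl; field).
      apply Rpower_1; auto. }
    assert (hp6 : (IZR X <= p^6)%R) by (rewrite <- ht6; apply pow_incr; lra).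
    assert (0 < p) by lra.
    repeat split; auto.
    + destruct (Rle_lt_dec (Rabs (IZR A)) (p^2)) as [r|r]; auto. exfalso.
      assert (H4 : (p^2)^3 < (Rabs (IZR A))^3) by (apply pow_lt_S; [apply pow_le; lra| lra]).
      replace ((p^2)^3) with (p^6) in H4 by ring. lra.
    + destruct (Rle_lt_dec (Rabs (IZR B)) (p^3)) as [r|r]; auto. exfalso.
      assert (H4 : (p^3)^2 < (Rabs (IZR B))^2) by (apply pow_lt_S; [apply pow_le; lra| lra]).
      replace ((p^3)^2) with (p^6) in H4 by ring. lra.
Qed.

Close Scope R_scope.

Theorem corollary3p4
  (a1 a2 a3 a4 a6 : Z) (Hmin : global_minimal a1 a2 a3 a4 a6)
  (xP yP xQ yQ : Q) (x1 x2 s : Z)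
  (HP : on_curve (shortA a1 a2 a3 a4 a6) (shortB a1 a2 a3 a4 a6) (Aff xP yP))
  (HQ : on_curve (shortA a1 a2 a3 a4 a6) (shortB a1 a2 a3 a4 a6) (Aff xQ yQ))
  (Hs : (0 < s)%Z)
  (HxP : Q2R xP = (IZR x1 / IZR s)%R)
  (HxQ : Q2R xQ = (IZR x2 / IZR s)%R)
  (Hlow : (Rpower (IZR (Z.max (Z.abs (shortA a1 a2 a3 a4 a6) ^ 3)
                              (Z.abs (shortB a1 a2 a3 a4 a6) ^ 2))) (1/6)
           <= Q2R xP)%R)
  (Hlt : (Q2R xP < Q2R xQ)%R) :
  (hpt (pt_add (shortA a1 a2 a3 a4 a6) (Aff xP yP) (Aff xQ yQ))
   <= hpt (Aff xP yP) + 2 * hpt (Aff xQ yQ) + 3 * ln (IZR s) + 29/10)%R.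
Proof.
  Local Open Scope R_scope.
  clear Hmin.
  set (A := shortA a1 a2 a3 a4 a6) in *. set (B := shortB a1 a2 a3 a4 a6) in *.
  clearbody A B.
  destruct (low_bounds A B (Q2R xP) Hlow) as [hp [hA hB]].
  set (p := Q2R xP) in *; set (q := Q2R xQ) in *.
  set (yp := Q2R yP); set (yq := Q2R yQ).
  assert (hS : 0 < IZR s) by (apply IZR_lt; lia).
  assert (hx1 : IZR x1 = p * IZR s) by (rewrite HxP; field; lra).
  assert (hx2 : IZR x2 = q * IZR s) by (rewrite HxQ; field; lra).
  assert (hyP : yp^2 = p^3 + IZR A * p + IZR B).
  { simpl in HP.
    assert (HP' : (yP*yP == xP*xP*xP + inject_Z A * xP + inject_Z B)%Q)
      by (transitivity (yP^2)%Q; [ring| rewrite HP; ring]).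
    apply Qeq_eqR in HP'. rewrite !Q2R_plus, !Q2R_mult, !Q2R_inj in HP'.
    unfold yp, p. simpl. rewrite !Rmult_1_r. rewrite HP'. ring. }
  assert (hyQ : yq^2 = q^3 + IZR A * q + IZR B).
  { simpl in HQ.
    assert (HQ' : (yQ*yQ == xQ*xQ*xQ + inject_Z A * xQ + inject_Z B)%Q)
      by (transitivity (yQ^2)%Q; [ring| rewrite HQ; ring]).
    apply Qeq_eqR in HQ'. rewrite !Q2R_plus, !Q2R_mult, !Q2R_inj in HQ'.
    unfold yq, q. simpl. rewrite !Rmult_1_r. rewrite HQ'. ring. }
  set (mq := (yP*yQ*(inject_Z s*inject_Z s*inject_Z s))%Q).
  set (F1 := (x1*x1*x1 + A*x1*s*s + B*s*s*s)%Z).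
  set (F2 := (x2*x2*x2 + A*x2*s*s + B*s*s*s)%Z).
  assert (hF1 : IZR F1 = yp^2 * IZR s ^ 3).
  { unfold F1. repeat rewrite ?mult_IZR, ?plus_IZR. rewrite hx1, hyP. ring. }
  assert (hF2 : IZR F2 = yq^2 * IZR s ^ 3).
  { unfold F2. repeat rewrite ?mult_IZR, ?plus_IZR. rewrite hx2, hyQ. ring. }
  assert (hmq : (mq*mq == inject_Z (F1*F2))%Q).
  { apply eqR_Qeq. unfold mq. rewrite !Q2R_mult, !Q2R_inj, mult_IZR, hF1, hF2.
    fold yp yq. ring. }
  destruct (Qint_sq mq _ hmq) as [m hm].
  assert (hmR : IZR m = yp * yq * IZR s ^ 3).
  { rewrite <- Q2R_inj. rewrite <- (Qeq_eqR _ _ hm). unfold mq.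
    rewrite !Q2R_mult, !Q2R_inj. fold yp yq. ring. }
  assert (hneq : Qeq_bool xP xQ = false).
  { destruct (Qeq_bool xP xQ) eqn:E; auto. apply Qeq_bool_eq, Qeq_eqR in E.
    fold p q in E. lra. }
  unfold pt_add. rewrite hneq. unfold hpt.
  match goal with |- (hQ ?t <= _)%R => set (x3 := t) end.
  set (N := ((x1*x2 + A*s*s)*(x1+x2) + 2*B*s*s*s - 2*m)%Z).
  set (D := (s*(x2-x1)*(x2-x1))%Z).
  assert (hx12 : (x1 < x2)%Z) by (apply lt_IZR; rewrite hx1, hx2; nra).
  assert (hD : (0 < D)%Z) by (unfold D; apply Z.mul_pos_pos; [apply Z.mul_pos_pos|]; lia).
  assert (hqp : q - p <> 0) by lra.
  assert (Ex3 : Q2R x3 = ((yq - yp)/(q-p))^2 - p - q).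
  { unfold x3.
    assert (hQne : ~ (xQ - xP == 0)%Q).
    { intro E. apply Qeq_eqR in E. rewrite Q2R_minus, RMicromega.Q2R_0 in E. fold p q in E. lra. }
    rewrite (Qeq_eqR _ ((yQ-yP)/(xQ-xP) * ((yQ-yP)/(xQ-xP)) - xP - xQ)%Q) by ring.
    rewrite !Q2R_minus, Q2R_mult, Q2R_div by exact hQne. rewrite !Q2R_minus.
    fold p q yp yq. ring. }
  assert (hx3 : (x3 * inject_Z D == inject_Z N)%Q).
  { apply eqR_Qeq. rewrite Q2R_mult, !Q2R_inj, Ex3.
    unfold N, D. repeat rewrite ?mult_IZR, ?plus_IZR, ?minus_IZR. rewrite hx1, hx2, hmR.
    replace (((yq - yp)/(q-p))^2) with ((yq^2 + yp^2 - 2*yp*yq)/(q-p)^2) by (field; exact hqp).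
    rewrite hyP, hyQ. field. exact hqp. }
  destruct (hQ_upper x3 N D hD hx3) as [u1 u2].
  assert (hxPq : (xP * inject_Z s == inject_Z x1)%Q).
  { apply eqR_Qeq. rewrite Q2R_mult, !Q2R_inj, hx1. fold p. ring. }
  assert (hxQq : (xQ * inject_Z s == inject_Z x2)%Q).
  { apply eqR_Qeq. rewrite Q2R_mult, !Q2R_inj, hx2. fold q. ring. }
  destruct (hQ_lower xP x1 s Hs hxPq) as [l1 l1'].
  destruct (hQ_lower xQ x2 s Hs hxQq) as [l2 l2'].
  unfold hQ.
  set (H1 := Z.max (Z.abs (Qnum (Qred xP))) (Zpos (Qden (Qred xP)))) in *.
  set (H2 := Z.max (Z.abs (Qnum (Qred xQ))) (Zpos (Qden (Qred xQ)))) in *.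
  set (H3 := Z.max (Z.abs (Qnum (Qred x3))) (Zpos (Qden (Qred x3)))).
  assert (hx1p : (0 < x1)%Z) by (apply lt_IZR; rewrite hx1; nra).
  apply IZR_le in l1. apply IZR_le in l1'. apply IZR_le in l2. apply IZR_le in l2'.
  rewrite mult_IZR, Z.abs_eq in l1 by lia. rewrite mult_IZR in l1'.
  rewrite mult_IZR, Z.abs_eq in l2 by lia. rewrite mult_IZR in l2'.
  rewrite hx1 in l1. rewrite hx2 in l2.
  set (h1 := IZR H1) in *. set (h2 := IZR H2) in *. set (S := IZR s) in *.
  assert (hh1 : 1 <= h1) by nra.
  assert (hh2 : 1 <= h2) by nra.
  assert (hpS : p <= h1) by nra.
  assert (hqS : q <= h2) by nra.
  assert (hcore : Rabs (IZR N) <= 12 * (p*S) * (q*S)^2).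
  { replace (IZR N) with (((p*S)*(q*S) + IZR A * S^2)*((p*S)+(q*S)) + 2*(IZR B * S^3) - 2*IZR m).
    2:{ unfold N. repeat rewrite ?mult_IZR, ?plus_IZR, ?minus_IZR. rewrite hx1, hx2. fold S. ring. }
    apply core.
    - nra.
    - nra.
    - rewrite Rabs_mult, (Rabs_pos_eq (S^2)) by (apply pow_le; lra).
      replace ((p*S)^2) with (p^2 * S^2) by ring. apply Rmult_le_compat_r; [apply pow_le; lra| exact hA].
    - rewrite Rabs_mult, (Rabs_pos_eq (S^3)) by (apply pow_le; lra).
      replace ((p*S)^3) with (p^3 * S^3) by ring. apply Rmult_le_compat_r; [apply pow_le; lra| exact hB].
    - replace ((p * S) ^ 3 + IZR A * S ^ 2 * (p * S) + IZR B * S ^ 3) with (yp^2 * S^3) by (rewrite hyP; ring).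
      apply Rmult_le_pos; apply pow_le; [apply pow2_ge_0 | lra] || (apply Rmult_le_pos; [apply pow2_ge_0| apply pow_le; lra]).
    - replace ((q * S) ^ 3 + IZR A * S ^ 2 * (q * S) + IZR B * S ^ 3) with (yq^2 * S^3) by (rewrite hyQ; ring).
      apply Rmult_le_pos; [apply pow2_ge_0| apply pow_le; lra].
    - rewrite hmR. fold S.
      replace ((p * S) ^ 3 + IZR A * S ^ 2 * (p * S) + IZR B * S ^ 3) with (yp^2 * S^3) by (rewrite hyP; ring).
      replace ((q * S) ^ 3 + IZR A * S ^ 2 * (q * S) + IZR B * S ^ 3) with (yq^2 * S^3) by (rewrite hyQ; ring).
      ring. }
  assert (hbig : IZR H3 <= 12 * (h1 * (h2 * h2) * (S * S * S))).
  { unfold H3. apply Zmax_IZR_le.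
    - apply IZR_le in u1. rewrite !abs_IZR in u1. rewrite abs_IZR.
      assert (12 * (p*S) * (q*S)^2 <= 12 * (h1 * (h2 * h2) * (S * S * S))).
      { replace (12 * (p*S) * (q*S)^2) with (12 * (p * (q*q) * (S*S*S))) by ring.
        apply Rmult_le_compat_l; [lra|]. apply Rmult_le_compat_r; [nra|].
        apply Rmult_le_compat; nra. }
      lra.
    - apply IZR_le in u2.
      assert (IZR D <= S * (q*S)^2).
      { unfold D. repeat rewrite ?mult_IZR, ?minus_IZR. rewrite hx1, hx2. fold S.
        assert (0 < p*S) by nra. assert (p*S < q*S) by nra.
        assert ((q*S - p*S)*(q*S - p*S) <= (q*S)^2) by nra.
        replace (S * (q*S - p*S) * (q*S - p*S)) with (S * ((q*S - p*S)*(q*S - p*S))) by ring.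
        apply Rmult_le_compat_l; lra. }
      assert (S * (q*S)^2 <= 12 * (h1 * (h2 * h2) * (S * S * S))).
      { replace (S * (q*S)^2) with (1 * (q*q) * (S*S*S)) by ring.
        assert (0 < S*S*S) by (repeat apply Rmult_lt_0_compat; lra).
        assert (1 * (q*q) <= h1 * (h2*h2)) by (apply Rmult_le_compat; nra).
        nra. }
      lra. }
  assert (hH3 : 0 < IZR H3).
  { apply IZR_lt. unfold H3. lia. }
  eapply Rle_trans; [apply ln_le'; [exact hH3| exact hbig]|].
  assert (0 < h2*h2) by nra. assert (0 < S*S) by nra. assert (0 < S*S*S) by nra.
  assert (0 < h1*(h2*h2)) by nra.
  rewrite !ln_mult by lra.
  pose proof ln12. lra.
Qed.
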